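(* Under the standing setup below (in particular, with $\mathcal C\subseteq\mathcal C_G$ a closed convex cone and $\mathcal S\subseteq\mathcal S_G$ a closed convex set satisfying $\overline{\mathcal T}=\{\Phi\in\mathcal C:\sum_{m}\Phi_m\in\mathcal S\}$), the optimal value of Problem (P) coincides with the optimal value of Problem (D), i.e. $$\sup_{\Phi\in\mathsf P}P(\Phi)=\inf_{(\chi,q)\in\mathsf D}D_{\mathcal S}(\chi,q).$$
   Context: Standing setup. All Hilbert spaces are finite-dimensional complex. Fix an integer $T\ge1$ and systems $\mathcal V_1,\dots,\mathcal V_T,\mathcal W_1,\dots,\mathcal W_T$; set $\mathcal W_0:=\mathbb C$ and $\tilde{\mathcal V}:=\mathcal W_T\otimes\mathcal V_T\otimes\cdots\otimes\mathcal W_1\otimes\mathcal V_1$. For a system $\mathcal X$, $N_{\mathcal X}$ is its dimension, $I_{\mathcal X}$ its identity, $\mathrm{Her}_{\mathcal X}$ the real Hilbert space of Hermitian operators on $\mathcal X$ with inner product $\langle X,Y\rangle=\mathrm{Tr}(XY)$, and $\mathrm{Pos}_{\mathcal X}$ the set of positive semidefinite operators; $X\ge Y$ means $X-Y$ is positive semidefinite; $\mathrm{Tr}_{\mathcal X}$ is the partial trace over $\mathcal X$. For a subset $A$ of a real vector space, $\mathrm{Lin}(A)$ is its real linear span and $\overline A$ its closure. $\mathcal I_n:=\{0,\dots,n-1\}$. Combs: $\mathrm{Chn}_{\tilde{\mathcal V}}$ is the set of $c\in\mathrm{Pos}_{\tilde{\mathcal V}}$ for which there exist $c_t\in\mathrm{Pos}_{\mathcal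 W_t\otimes\mathcal V_t\otimes\cdots\otimes\mathcal W_1\otimes\mathcal V_1}$ ($t=1,\dots,T$) with $c_T=c$, $\mathrm{Tr}_{\mathcal W_t}c_t=I_{\mathcal V_t}\otimes c_{t-1}$ for $2\le t\le T$, and $\mathrm{Tr}_{\mathcal W_1}c_1=I_{\mathcal V_1}$. $\mathcal S_G$ is the set of operators $I_{\mathcal W_T}\otimes\tau_T$ where $\tau_t\in\mathrm{Pos}_{\mathcal V_t\otimes\mathcal W_{t-1}\otimes\mathcal V_{t-1}\otimes\cdots\otimes\mathcal W_1\otimes\mathcal V_1}$ ($t=1,\dots,T$) satisfy $\mathrm{Tr}\,\tau_1=1$ and $\mathrm{Tr}_{\mathcal V_t}\tau_t=I_{\mathcal W_{t-1}}\otimes\tau_{t-1}$ for $2\le t\le T$. Fix an integer $M\ge2$; $\mathcal C_G:=\mathrm{Pos}_{\tilde{\mathcal V}}^M$ and the set of (all) testers is $\mathcal T_G:=\{\Phi=\{\Phi_m\}_{m=0}^{M-1}\in\mathcal C_G:\sum_m\Phi_m\in\mathcal S_G\}$. Problem data: an integer $J\ge0$, $c_m,a_{j,m}\in\mathrm{Her}_{\tilde{\mathcal V}}$ and $b_j\in\mathbb R$ ($m\in\mathcal I_M$, $j\in\mathcal I_J$); $\eta_j(\Phi):=\sum_m\langle\Phi_m,a_{j,m}\rangle-b_j$ and $P(\Phi):=\sum_m\langle\Phi_m,c_m\rangle$. $\mathcal T$ is a nonempty convex subset of $\mathcal T_G$, $\mathsf P:=\{\Phi\in\mathcal T:\eta_j(\Phi)\le0\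 \forall j\in\mathcal I_J\}$, and it is assumed that $\overline{\mathsf P}=\{\Phi\in\overline{\mathcal T}:\eta_j(\Phi)\le0\ \forall j\}$. $\mathcal C\subseteq\mathcal C_G$ is a closed convex cone and $\mathcal S\subseteq\mathcal S_G$ a closed convex set with $\overline{\mathcal T}=\{\Phi\in\mathcal C:\sum_m\Phi_m\in\mathcal S\}$. Problem (P): maximize $P(\Phi)$ subject to $\Phi\in\mathsf P$; its optimal value is $\sup_{\Phi\in\mathsf P}P(\Phi)$ ($-\infty$ if $\mathsf P=\emptyset$); an optimal solution is a $\Phi\in\mathsf P$ attaining it. Dual: $\mathcal C^*:=\{\{y_m\}_{m}\in\mathrm{Her}_{\tilde{\mathcal V}}^M:\sum_m\langle\Phi_m,y_m\rangle\ge0\ \forall\Phi\in\mathcal C\}$; $\lambda_{\mathcal S}(\chi):=\sup_{\varphi\in\mathcal S}\langle\varphi,\chi\rangle$; $z_m(q):=c_m-\sum_jq_ja_{j,m}$ for $q=\{q_j\}\in\mathbb R_+^J$; $\mathsf D:=\{(\chi,q)\in\mathrm{Her}_{\tilde{\mathcal V}}\times\mathbb R_+^J:\{\chi-z_m(q)\}_{m}\in\mathcal C^*\}$; $D_{\mathcal S}(\chi,q):=\lambda_{\mathcal S}(\chi)+\sum_jq_jb_j$. Problem (D): minimize $D_{\mathcal S}(\chi,q)$ over $(\chi,q)\in\mathsf D$; its optimal value is the infimum ($+\infty$ if $\mathsf D=\emptyset$); an optimal solution attains it. *)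

(* Defs.v *)
From HB Require Import structures.
From mathcomp Require Import all_boot all_order all_algebra.
From mathcomp Require Import all_classical all_reals ereal.
From mathcomp.real_closed Require Import complex mxtens.
Set Implicit Arguments. Unset Strict Implicit. Unset Printing Implicit Defensive.
Import Order.TTheory GRing.Theory Num.Theory.
Local Open Scope ring_scope.
Local Open Scope classical_set_scope.
Local Open Scope complex_scope.
Local Open Scope ring_scope.

Section QuantumDefs.
Variable R : realType.
Local Notation C := (R[i]).

Definition adjmx m n (A : 'M[C]_(m, n)) : 'M[C]_(n, m) := (map_mx Num.conj A)^T.

Definition herm_op n (A : 'M[C]_n) : Prop := adjmx A = A.

Definition psd_op n (A : 'M[C]_n) : Prop :=
  herm_op A /\ forall v : 'cV[C]_n, 0 <= (adjmx v *m A *m v) 0 0.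

(* Hilbert-Schmidt inner product <X,Y> = Tr(XY) (real for Hermitian X, Y) *)
Definition hs_ip n (X Y : 'M[C]_n) : R := complex.Re (\tr (X *m Y)).

(* partial trace over the FIRST tensor factor of X (x) Y, where the
   Kronecker product is mxtens's  A *t B  (index (i,j) |-> i * n + j) *)
Definition ptr1 m n (A : 'M[C]_(m * n)) : 'M[C]_n :=
  \matrix_(i < n, j < n) \sum_(k < m) A (mxtens_index (k, i)) (mxtens_index (k, j)).

(* dimension of W_t (x) V_t (x) ... (x) W_1 (x) V_1 (dimPre 0 = 1, i.e. C) *)
Fixpoint dimPre (nV nW : nat -> nat) (t : nat) : nat :=
  if t is s.+1 then (nW s.+1 * (nV s.+1 * dimPre nV nW s))%N else 1%N.

(* S_G for T = Tp.+1 :  tau t  stands for tau_{t+1}, an operator on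
   V_{t+1} (x) W_t (x) V_t (x) ... (x) W_1 (x) V_1 *)
Definition in_SG (nV nW : nat -> nat) (Tp : nat)
    (X : 'M[C]_(dimPre nV nW Tp.+1)) : Prop :=
  exists tau : forall t : nat, 'M[C]_(nV t.+1 * dimPre nV nW t),
    (forall t, (t <= Tp)%N -> psd_op (tau t)) /\
    \tr (tau 0%N) = 1 /\
    (forall t, (t.+1 <= Tp)%N ->
       ptr1 (tau t.+1) = (1%:M : 'M[C]_(nW t.+1)) *t tau t) /\
    X = (1%:M : 'M[C]_(nW Tp.+1)) *t tau Tp.

Definition in_CG M N (Phi : 'I_M -> 'M[C]_N) : Prop := forall m, psd_op (Phi m).

Definition in_TG (nV nW : nat -> nat) (Tp M : nat)
    (Phi : 'I_M -> 'M[C]_(dimPre nV nW Tp.+1)) : Prop :=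
  in_CG Phi /\ @in_SG nV nW Tp (\sum_(m < M) Phi m).

(* topological closure (entrywise = norm topology in finite dimension) *)
Definition mx_closure N (A : set 'M[C]_N) : set 'M[C]_N :=
  [set X | forall e : R, 0 < e ->
     exists2 Y, A Y & forall i j, `|X i j - Y i j| < e%:C].

Definition tup_closure M N (A : set ('I_M -> 'M[C]_N)) : set ('I_M -> 'M[C]_N) :=
  [set Phi | forall e : R, 0 < e ->
     exists2 Psi, A Psi & forall m i j, `|Phi m i j - Psi m i j| < e%:C].

Definition mx_closed N (A : set 'M[C]_N) : Prop := mx_closure A `<=` A.
Definition tup_closed M N (A : set ('I_M -> 'M[C]_N)) : Prop := tup_closure A `<=` A.

Definition mx_convex N (A : set 'M[C]_N) : Prop :=
  forall X Y (l : R), A X -> A Y -> 0 <= l -> l <= 1 ->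
    A (l%:C *: X + (1 - l)%:C *: Y).

Definition tup_convex M N (A : set ('I_M -> 'M[C]_N)) : Prop :=
  forall X Y (l : R), A X -> A Y -> 0 <= l -> l <= 1 ->
    A (fun m => l%:C *: X m + (1 - l)%:C *: Y m).

Definition tup_cone M N (A : set ('I_M -> 'M[C]_N)) : Prop :=
  forall X (l : R), A X -> 0 <= l -> A (fun m => l%:C *: X m).

Definition dual_cone M N (K : set ('I_M -> 'M[C]_N)) : set ('I_M -> 'M[C]_N) :=
  [set y | (forall m, herm_op (y m)) /\
           forall Phi, K Phi -> 0 <= \sum_(m < M) hs_ip (Phi m) (y m)].

Definition support_fun N (S : set 'M[C]_N) (chi : 'M[C]_N) : \bar R :=
  ereal_sup [set (hs_ip phi chi)%:E | phi in S].

End QuantumDefs.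
Arguments in_SG {R} nV nW Tp X.
Arguments in_TG {R} nV nW Tp M Phi.

(* Main.v *)
Require Import Defs.
From HB Require Import structures.
From mathcomp Require Import all_boot all_order all_algebra.
From mathcomp Require Import all_classical all_reals ereal.
From mathcomp.real_closed Require Import complex mxtens.
From mathcomp Require Import topology normedtype derive.
From mathcomp Require Import ring lra.
Import Order.TTheory GRing.Theory Num.Theory.
Import numFieldNormedType.Exports.
Set Implicit Arguments. Unset Strict Implicit. Unset Printing Implicit Defensive.
Local Open Scope classical_set_scope.
Local Open Scope complex_scope.
Local Open Scope ring_scope.

Section Basics.
Variable R : realType.
Local Notation C := R[i].
Local Notation RE := complex.Re.
Local Notation IM := complex.Im.

Lemma ReM (x y : C) : RE (x * y) = RE x * RE y - IM x * IM y.
Proof. by case: x => a b; case: y => c d. Qed.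
Lemma ImM (x y : C) : IM (x * y) = RE x * IM y + IM x * RE y.
Proof. by case: x => a b; case: y => c d. Qed.
Lemma ReD (x y : C) : RE (x + y) = RE x + RE y.
Proof. by case: x => a b; case: y => c d. Qed.
Lemma ImD (x y : C) : IM (x + y) = IM x + IM y.
Proof. by case: x => a b; case: y => c d. Qed.
Lemma ReN (x : C) : RE (- x) = - RE x.
Proof. by case: x => a b. Qed.
Lemma ImN (x : C) : IM (- x) = - IM x.
Proof. by case: x => a b. Qed.
Lemma ReB (x y : C) : RE (x - y) = RE x - RE y.
Proof. by rewrite ReD ReN. Qed.
Lemma ImB (x y : C) : IM (x - y) = IM x - IM y.
Proof. by rewrite ImD ImN. Qed.
Lemma Re_sum (I : Type) (r : seq I) (P : pred I) (F : I -> C) :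
  RE (\sum_(i <- r | P i) F i) = \sum_(i <- r | P i) RE (F i).
Proof.
exact: (big_morph _ (@ReD) (erefl _)).
Qed.
Lemma Im_sum (I : Type) (r : seq I) (P : pred I) (F : I -> C) :
  IM (\sum_(i <- r | P i) F i) = \sum_(i <- r | P i) IM (F i).
Proof.
exact: (big_morph _ (@ImD) (erefl _)).
Qed.
Lemma Re_realM (k : R) (x : C) : RE (k%:C * x) = k * RE x.
Proof. by case: x => a b /=; rewrite mul0r subr0. Qed.
Lemma Im_realM (k : R) (x : C) : IM (k%:C * x) = k * IM x.
Proof. by case: x => a b /=; rewrite mul0r addr0. Qed.
Lemma conjE (x : C) : Num.conj x = conjc x.
Proof. by []. Qed.
Lemma Re_conj (x : C) : RE (conjc x) = RE x.
Proof. by case: x. Qed.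
Lemma Im_conj (x : C) : IM (conjc x) = - IM x.
Proof. by case: x. Qed.
Lemma ReIm_eta (x : C) : RE x +i* IM x = x.
Proof. by case: x. Qed.

Lemma adjmxE m n (A : 'M[C]_(m, n)) i j : adjmx A i j = conjc (A j i).
Proof. by rewrite !mxE. Qed.

Lemma herm_entry n (A : 'M[C]_n) i j : herm_op A -> A j i = conjc (A i j).
Proof. by move=> hA; rewrite -[in LHS]hA adjmxE. Qed.

Definition qf n (A : 'M[C]_n) (v : 'cV[C]_n) : C := (adjmx v *m A *m v) 0 0.

Definition ev n (i : 'I_n) : 'cV[C]_n := delta_mx i 0.

Lemma adjmxDZ m n (v w : 'M[C]_(m, n)) (u : C) :
  adjmx (v + u *: w) = adjmx v + conjc u *: adjmx w.
Proof. by apply/matrixP => a b; rewrite !mxE rmorphD rmorphM. Qed.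

Lemma adj_ev n (i : 'I_n) : adjmx (ev i) = delta_mx 0 i.
Proof.
apply/matrixP => a b; rewrite !mxE.
by case: (b == i); case: (a == 0) => /=; rewrite ?rmorph0 ?rmorph1.
Qed.

Lemma qf_ev n (A : 'M[C]_n) i j : (adjmx (ev i) *m A *m ev j) 0 0 = A i j.
Proof. by rewrite adj_ev -rowE /ev -colE !mxE. Qed.

Lemma mxDE m n (A B : 'M[C]_(m, n)) i j : (A + B) i j = A i j + B i j.
Proof. by rewrite mxE. Qed.
Lemma mxZE m n (a : C) (A : 'M[C]_(m, n)) i j : (a *: A) i j = a * A i j.
Proof. by rewrite mxE. Qed.

Lemma qf_ev2 n (A : 'M[C]_n) i j (u : C) :
  qf A (ev i + u *: ev j) =
  A i i + u * A i j + conjc u * A j i + conjc u * u * A j j.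
Proof.
rewrite /qf adjmxDZ !mulmxDl !mulmxDr -!scalemxAl -!scalemxAr !mxDE !mxZE !qf_ev.
by rewrite mulrA !addrA.
Qed.

End Basics.
Arguments ev {R n} i.
Section PSD.
Variable R : realType.
Local Notation C := R[i].
Local Notation RE := complex.Re.
Local Notation IM := complex.Im.

Lemma conjcM (x y : C) : conjc (x * y) = conjc x * conjc y.
Proof. by case: x => a b; case: y => c d; rewrite /=; congr (_ +i* _); ring. Qed.

Lemma lec0E (z : C) : (0 <= z) = (IM z == 0) && (0 <= RE z).
Proof. by case: z => a b; rewrite lecE /= eq_sym. Qed.

Lemma psd_diag n (A : 'M[C]_n) i : psd_op A -> 0 <= RE (A i i) /\ IM (A i i) = 0.
Proof.
move=> [hH hP]; have := hP (ev i); rewrite qf_ev lec0E => /andP[/eqP -> ->].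
by [].
Qed.

Lemma psd_quad n (A : 'M[C]_n) i j (u : C) : psd_op A -> conjc u * u = 1 ->
  0 <= RE (A i i) + RE (A j j) + 2 * RE (u * A i j).
Proof.
move=> [hH hP] hu; have := hP (ev i + u *: ev j).
rewrite -/(qf A _) qf_ev2 hu mul1r (herm_entry i j hH) lec0E => /andP[_].
rewrite !ReD -conjcM Re_conj.
have ->: (2 : R) * RE (u * A i j) = RE (u * A i j) + RE (u * A i j).
  by rewrite mulr2n mulrDl mul1r.
by move=> h; rewrite (le_trans h) // le_eqVlt; apply/orP; left; apply/eqP; ring.
Qed.

Lemma psd_off n (A : 'M[C]_n) i j : psd_op A ->
  `|RE (A i j)| <= (RE (A i i) + RE (A j j)) / 2 /\
  `|IM (A i j)| <= (RE (A i i) + RE (A j j)) / 2.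
Proof.
move=> hA.
have hc (a b : R) : a ^+ 2 + b ^+ 2 = 1 -> conjc (a +i* b) * (a +i* b) = 1.
  move=> hab; apply/eqP; rewrite eq_complex /=; apply/andP; split; apply/eqP.
    by rewrite -hab; ring.
  by ring.
have e1 : conjc (1 : C) * 1 = 1 by apply: hc; ring.
have e2 : conjc (-1 : C) * (-1) = 1 by apply: hc; ring.
have e3 : conjc ('i : C) * 'i = 1 by apply: hc; ring.
have e4 : conjc (-'i : C) * (-'i) = 1 by apply: hc; ring.
have h1 := psd_quad (u := 1) i j hA e1.
have h2 := psd_quad (u := -1) i j hA e2.
have h3 := psd_quad (u := 'i) i j hA e3.
have h4 := psd_quad (u := -'i) i j hA e4.
move: h1 h2 h3 h4; case: (A i j) => a b /=.
rewrite !ler_norml; move=> h1 h2 h3 h4; split; apply/andP; split; lra.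
Qed.
End PSD.

Section HS.
Variable R : realType.
Local Notation C := R[i].
Local Notation RE := complex.Re.
Local Notation IM := complex.Im.

Lemma hs_ipE n (X Y : 'M[C]_n) :
  hs_ip X Y = \sum_i \sum_k RE (X i k * Y k i).
Proof. by rewrite /hs_ip /mxtrace Re_sum; apply: eq_bigr => i _; rewrite mxE Re_sum. Qed.

Lemma hs_ipE2 n (X Y : 'M[C]_n) :
  hs_ip X Y = \sum_i \sum_k (RE (X i k) * RE (Y k i) - IM (X i k) * IM (Y k i)).
Proof. by rewrite hs_ipE; apply: eq_bigr => i _; apply: eq_bigr => k _; rewrite ReM. Qed.

Lemma hs_ip_herm n (X Y : 'M[C]_n) : herm_op Y ->
  hs_ip X Y = \sum_i \sum_k (RE (X i k) * RE (Y i k) + IM (X i k) * IM (Y i k)).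
Proof.
move=> hY; rewrite hs_ipE2; apply: eq_bigr => i _; apply: eq_bigr => k _.
by rewrite (herm_entry i k hY) Re_conj Im_conj mulrN opprK.
Qed.

Lemma hs_ipDl n (X Y Z : 'M[C]_n) : hs_ip (X + Y) Z = hs_ip X Z + hs_ip Y Z.
Proof. by rewrite /hs_ip mulmxDl mxtraceD ReD. Qed.
Lemma hs_ipDr n (X Y Z : 'M[C]_n) : hs_ip X (Y + Z) = hs_ip X Y + hs_ip X Z.
Proof. by rewrite /hs_ip mulmxDr mxtraceD ReD. Qed.
Lemma hs_ipNl n (X Z : 'M[C]_n) : hs_ip (- X) Z = - hs_ip X Z.
Proof. by rewrite /hs_ip mulNmx (raddfN (@mxtrace _ _)) ReN. Qed.
Lemma hs_ipNr n (X Z : 'M[C]_n) : hs_ip X (- Z) = - hs_ip X Z.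
Proof. by rewrite /hs_ip mulmxN (raddfN (@mxtrace _ _)) ReN. Qed.
Lemma hs_ipBl n (X Y Z : 'M[C]_n) : hs_ip (X - Y) Z = hs_ip X Z - hs_ip Y Z.
Proof. by rewrite hs_ipDl hs_ipNl. Qed.
Lemma hs_ipBr n (X Y Z : 'M[C]_n) : hs_ip X (Y - Z) = hs_ip X Y - hs_ip X Z.
Proof. by rewrite hs_ipDr hs_ipNr. Qed.
Lemma hs_ipZl n (a : R) (X Z : 'M[C]_n) : hs_ip (a%:C *: X) Z = a * hs_ip X Z.
Proof. by rewrite /hs_ip -scalemxAl mxtraceZ Re_realM. Qed.
Lemma hs_ipZr n (a : R) (X Z : 'M[C]_n) : hs_ip X (a%:C *: Z) = a * hs_ip X Z.
Proof. by rewrite /hs_ip -scalemxAr mxtraceZ Re_realM. Qed.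
Lemma hs_ip0l n (Z : 'M[C]_n) : hs_ip 0 Z = 0.
Proof. by rewrite /hs_ip mul0mx mxtrace0. Qed.
Lemma hs_ip0r n (Z : 'M[C]_n) : hs_ip Z 0 = 0.
Proof. by rewrite /hs_ip mulmx0 mxtrace0. Qed.
Lemma hs_ip_suml n (I : Type) (r : seq I) (P : pred I) (F : I -> 'M[C]_n) Z :
  hs_ip (\sum_(i <- r | P i) F i) Z = \sum_(i <- r | P i) hs_ip (F i) Z.
Proof.
elim/big_rec2: _ => [|i y x _ <-]; first exact: hs_ip0l.
by rewrite hs_ipDl.
Qed.
Lemma hs_ip_sumr n (I : Type) (r : seq I) (P : pred I) (F : I -> 'M[C]_n) Z :
  hs_ip Z (\sum_(i <- r | P i) F i) = \sum_(i <- r | P i) hs_ip Z (F i).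
Proof.
elim/big_rec2: _ => [|i y x _ <-]; first exact: hs_ip0r.
by rewrite hs_ipDr.
Qed.

Definition nrm1 n (Y : 'M[C]_n) : R := \sum_i \sum_k (`|RE (Y i k)| + `|IM (Y i k)|).

Lemma nrm1_ge0 n (Y : 'M[C]_n) : 0 <= nrm1 Y.
Proof. by apply: sumr_ge0 => i _; apply: sumr_ge0 => k _; rewrite addr_ge0. Qed.

Lemma hs_bound n (X Y : 'M[C]_n) (B : R) :
  (forall i k, `|RE (X i k)| <= B /\ `|IM (X i k)| <= B) ->
  `|hs_ip X Y| <= B * nrm1 Y.
Proof.
move=> hX; rewrite hs_ipE2 /nrm1 (exchange_big _ _ _ _ _ (fun i k => _ + _)).
rewrite mulr_sumr; apply: le_trans (ler_norm_sum _ _ _) _.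
apply: ler_sum => i _; rewrite mulr_sumr; apply: le_trans (ler_norm_sum _ _ _) _.
apply: ler_sum => k _; have [h1 h2] := hX k i.
apply: le_trans (ler_normB _ _) _; rewrite !normrM mulrDr.
by apply: lerD; apply: ler_wpM2r.
Qed.

End HS.

Section SG.
Variable R : realType.
Local Notation C := R[i].
Local Notation RE := complex.Re.
Local Notation IM := complex.Im.

Lemma sum_tens (m n : nat) (F : 'I_(m * n) -> C) :
  \sum_x F x = \sum_(a < m) \sum_(b < n) F (mxtens_index (a, b)).
Proof.
rewrite pair_bigA /=.
rewrite (reindex (@mxtens_index m n)) /=; last first.
  by exists (@mxtens_unindex m n) => x _; [exact: mxtens_indexK|exact: mxtens_unindexK].
by apply: eq_bigr => -[a b].
Qed.

Lemma tr_ptr1 m n (A : 'M[C]_(m * n)) : \tr (ptr1 A) = \tr A.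
Proof.
rewrite /mxtrace sum_tens exchange_big /=.
by apply: eq_bigr => b _; rewrite mxE.
Qed.

Lemma tens1E m n (B : 'M[C]_n) a1 b1 a2 b2 :
  ((1%:M : 'M[C]_m) *t B) (mxtens_index (a1, b1)) (mxtens_index (a2, b2)) =
  (a1 == a2)%:R * B b1 b2.
Proof. by rewrite tensmxE mxE. Qed.

Lemma tr_tens1 m n (B : 'M[C]_n) : \tr ((1%:M : 'M[C]_m) *t B) = m%:R * \tr B.
Proof.
rewrite /mxtrace sum_tens.
under eq_bigr do under eq_bigr do rewrite tens1E eqxx mul1r.
by rewrite big_const_ord iter_addr_0 mulr_natl.
Qed.

Lemma herm_tens1 m n (B : 'M[C]_n) : herm_op B -> herm_op ((1%:M : 'M[C]_m) *t B).
Proof.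
move=> hB; rewrite /herm_op; apply/matrixP => x y.
case: (mxtens_indexP x) => a1 b1; case: (mxtens_indexP y) => a2 b2.
rewrite adjmxE !tens1E conjcM (herm_entry b1 b2 hB) eq_sym.
by rewrite conjc_nat conjcK.
Qed.

Lemma psd_trace_bound n (A : 'M[C]_n) : psd_op A -> forall i j,
  `|RE (A i j)| <= RE (\tr A) /\ `|IM (A i j)| <= RE (\tr A).
Proof.
move=> hA i j.
have hd k : RE (A k k) <= RE (\tr A).
  rewrite /mxtrace Re_sum (bigD1 k) //= lerDl.
  by apply: sumr_ge0 => l _; case: (psd_diag l hA).
have [h1 h2] := psd_off i j hA.
have hi := hd i; have hj := hd j.
split; [apply: le_trans h1 _|apply: le_trans h2 _]; rewrite ler_pdivrMr //; lra.
Qed.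

Fixpoint trcR (nW : nat -> nat) (t : nat) : R :=
  if t is s.+1 then (nW s.+1)%:R * trcR nW s else 1.

Lemma trcR_ge0 nW t : 0 <= trcR nW t.
Proof. by elim: t => [|t IH] //=; rewrite mulr_ge0. Qed.

Lemma SG_props (nV nW : nat -> nat) (Tp : nat) (X : 'M[C]_(dimPre nV nW Tp.+1)) :
  in_SG nV nW Tp X ->
  herm_op X /\ forall i j, `|RE (X i j)| <= trcR nW Tp /\ `|IM (X i j)| <= trcR nW Tp.
Proof.
move=> [tau [hpsd [htr0 [hrec ->]]]].
have htr : forall t, (t <= Tp)%N -> \tr (tau t) = (trcR nW t)%:C.
  elim=> [|t IH] ht; first by rewrite htr0.
  rewrite -tr_ptr1 hrec // tr_tens1 IH ?(ltnW ht) //=.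
  by rewrite rmorphM /= rmorph_nat.
have hT : psd_op (tau Tp) := hpsd Tp (leqnn _).
split; first by apply: herm_tens1; case: hT.
have hB := psd_trace_bound hT; rewrite htr // in hB.
move=> x y; case: (mxtens_indexP x) => a1 b1; case: (mxtens_indexP y) => a2 b2.
rewrite tens1E; case: (a1 == a2); rewrite ?mul1r ?mul0r; first exact: hB.
by rewrite normr0 trcR_ge0.
Qed.
End SG.

Section TupBound.
Variable R : realType.
Local Notation C := R[i].
Local Notation RE := complex.Re.
Local Notation IM := complex.Im.

Lemma psd_tuple_bound M n (Phi : 'I_M -> 'M[C]_n) (Bd : R) :
  (forall m, psd_op (Phi m)) -> (forall i, RE ((\sum_m Phi m) i i) <= Bd) ->
  forall m i j, `|RE (Phi m i j)| <= Bd /\ `|IM (Phi m i j)| <= Bd.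
Proof.
move=> hP hB m i j.
have hd k : RE (Phi m k k) <= Bd.
  apply: le_trans (hB k); rewrite summxE Re_sum (bigD1 m) //= lerDl.
  by apply: sumr_ge0 => l _; case: (psd_diag k (hP l)).
have [h1 h2] := psd_off i j (hP m).
have hi := hd i; have hj := hd j.
split; [apply: le_trans h1 _|apply: le_trans h2 _]; rewrite ler_pdivrMr //; lra.
Qed.

Lemma hs_ip_scalar n (X : 'M[C]_n) (a : R) : hs_ip X (a%:C)%:M = a * RE (\tr X).
Proof. by rewrite /hs_ip mul_mx_scalar mxtraceZ Re_realM. Qed.

Lemma herm_scalar n (a : R) : herm_op ((a%:C)%:M : 'M[C]_n).
Proof.
apply/matrixP => i j; rewrite adjmxE !mxE eq_sym.
by case: (i == j); rewrite ?mulr1n ?mulr0n; apply/eqP; rewrite eq_complex /= oppr0 !eqxx.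
Qed.


Lemma psd_trace_ge0 n (A : 'M[C]_n) : psd_op A -> 0 <= RE (\tr A).
Proof. by move=> hA; rewrite /mxtrace Re_sum; apply: sumr_ge0 => i _; case: (psd_diag i hA). Qed.

Lemma chi0_feas M n (c : 'I_M -> 'M[C]_n) (Phi : 'I_M -> 'M[C]_n) :
  (forall m, psd_op (Phi m)) ->
  0 <= \sum_m hs_ip (Phi m) (((\sum_m' nrm1 (c m'))%:C)%:M - c m).
Proof.
move=> hP; apply: sumr_ge0 => m _; rewrite hs_ipBr hs_ip_scalar subr_ge0.
have hb : forall i k, `|RE (Phi m i k)| <= RE (\tr (Phi m)) /\ `|IM (Phi m i k)| <= RE (\tr (Phi m)).
  exact: psd_trace_bound.
apply: le_trans (ler_norm _) _; apply: le_trans (hs_bound _ hb) _.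
rewrite mulrC; apply: ler_wpM2r; first exact: psd_trace_ge0.
rewrite (bigD1 m) //= lerDl; apply: sumr_ge0 => l _; exact: nrm1_ge0.
Qed.
End TupBound.

Section Near.
Variable R : realType.

Lemma near_ineq (V : Type) (I : finType) (Q : set V) (comb : R -> V -> V -> V)
  (G : V -> I -> R) (y : I -> R) zs :
  (forall z, Q z -> forall s, 0 < s -> s <= 1 -> Q (comb s z zs)) ->
  (forall z s k, G (comb s z zs) k = s * G z k + (1 - s) * G zs k) ->
  (forall z, Q z -> \sum_k (G zs k - y k) ^+ 2 <= \sum_k (G z k - y k) ^+ 2) ->
  forall z, Q z -> 0 <= \sum_k (G z k - G zs k) * (G zs k - y k).
Proof.
move=> hconv hlin hmin z hz.
set a := \sum_k _.
pose b := \sum_k (G z k - G zs k) ^+ 2.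
have hb : 0 <= b by apply: sumr_ge0 => k _; exact: sqr_ge0.
have key s : 0 < s -> s <= 1 -> 0 <= 2 * a + s * b.
  move=> s0 s1; have := hmin _ (hconv z hz s s0 s1).
  have -> : \sum_k (G (comb s z zs) k - y k) ^+ 2 =
            \sum_k (s * G z k + (1 - s) * G zs k - y k) ^+ 2.
    by apply: eq_bigr => k _; rewrite hlin.
  rewrite -subr_ge0 -sumrB.
  have -> : \sum_k ((s * G z k + (1 - s) * G zs k - y k) ^+ 2 - (G zs k - y k) ^+ 2)
      = s * (2 * a + s * b).
    rewrite /a /b mulr_sumr mulr_sumr -big_split mulr_sumr /=.
    by apply: eq_bigr => k _; ring.
  by rewrite pmulr_rge0.
have h1 := key 1 ltr01 (lexx _).
rewrite leNgt; apply/negP => ha.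
have bpos : 0 < b by lra.
have s0 : 0 < - a / b by rewrite divr_gt0 // oppr_gt0.
have s1 : - a / b <= 1 by rewrite ler_pdivrMr // mul1r; lra.
have := key _ s0 s1; rewrite divfK ?gt_eqF //; lra.
Qed.

Lemma exists_min (n : nat) (Q : set 'rV[R]_n) (f : 'rV[R]_n -> R) z0 (B : R) :
  closed Q -> Q z0 -> continuous f -> 0 <= B ->
  (forall z, Q z -> f z <= f z0 -> forall k, `|z ord0 k| <= B) ->
  exists2 zs, Q zs & forall z, Q z -> f zs <= f z.
Proof.
move=> hQ hz0 hf hB hbd.
pose A := Q `&` [set z | f z <= f z0].
have Acl : closed A.
  apply: closedI => //; apply: (preimage_closed (f := f) (D := [set x | x <= f z0])).
    by move=> x _; apply: hf.
  exact: closed_le.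
have Abd : bounded_set A.
  exists B; split; first by rewrite num_real.
  move=> M hM z [hz hfz]; change (mx_norm z <= M); rewrite mx_normrE.
  apply: bigmax_le; first by rewrite ltW // (le_lt_trans hB).
  move=> [i k] _ /=; rewrite (ord1 i); apply: ltW; apply: le_lt_trans (hM).
  exact: hbd.
have Acp : compact A by exact: bounded_closed_compact.
have A0 : A !=set0 by exists z0; split => //=.
have [c cA cmin] := compact_EVT_min A0 Acp (continuous_subspaceT hf).
move: cA; rewrite inE => -[cQ cle].
exists c => // z hz.
have [hzle|hzgt] := leP (f z) (f z0).
  by apply: cmin; rewrite inE.
by apply: le_trans cle (ltW hzgt).
Qed.
End Near.

Section Coord.
Variable R : realType.
Variable I : finType.
Local Notation V := 'rV[R]_#|{: I}|.

Definition crd (z : V) (k : I) : R := z ord0 (enum_rank k).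
Definition enc (f : I -> R) : V := \row_r f (enum_val r).

Lemma crd_enc f k : crd (enc f) k = f k.
Proof. by rewrite /crd /enc mxE enum_rankK. Qed.

Lemma crd_comb (s : R) (z1 z2 : V) k :
  crd (s *: z1 + (1 - s) *: z2) k = s * crd z1 k + (1 - s) * crd z2 k.
Proof. by rewrite /crd !mxE. Qed.

Lemma crd_cont k : continuous (fun z : V => crd z k).
Proof. exact: coord_continuous. Qed.

Lemma crd_all (z : V) (r : 'I_#|{: I}|) : z ord0 r = crd z (enum_val r).
Proof. by rewrite /crd enum_valK. Qed.

Lemma closed_approx (P : set V) :
  (forall z, (forall e : R, 0 < e -> exists2 z', P z' & forall k, `|crd z k - crd z' k| < e) -> P z) ->
  closed P.
Proof.
move=> hP z hz; apply: hP => e e0.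
have [z' [Pz' bz']] := hz _ (nbhsx_ballx z e e0).
exists z' => // k; move: bz'; rewrite mx_norm_ball /ball_ /= => h.
apply: le_lt_trans h; rewrite /crd.
change (`|z ord0 (enum_rank k) - z' ord0 (enum_rank k)| <= mx_norm (z - z')); rewrite mx_normrE.
apply/bigmax_geP; right; exists (ord0, enum_rank k) => //=.
by rewrite !mxE.
Qed.
End Coord.

Arguments trcR {R} nW t.

Section CNorm.
Variable R : realType.
Local Notation C := R[i].
Local Notation RE := complex.Re.
Local Notation IM := complex.Im.

Lemma cnorm_lt (w : C) (e : R) : 0 < e -> `|RE w| < e / 2 -> `|IM w| < e / 2 ->
  `|w| < e%:C.
Proof.
move=> e0 h1 h2; rewrite normc_def ltcR.
rewrite -[X in _ < X]ger0_norm ?ltW // -sqrtr_sqr ltr_sqrt ?exprn_gt0 //.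
move: h1 h2; rewrite !ltr_norml => /andP[h1 h1'] /andP[h2 h2'].
nra.
Qed.

Lemma cnorm_lt_inv (w : C) (e : R) : `|w| < e%:C -> `|RE w| < e /\ `|IM w| < e.
Proof.
rewrite normc_def ltcR => h; split; apply: le_lt_trans h; rewrite -sqrtr_sqr ler_sqrt ?addr_ge0 ?sqr_ge0 //.
  by rewrite lerDl sqr_ge0.
by rewrite lerDr sqr_ge0.
Qed.
End CNorm.

Section Main.
Variable R : realType.
Local Notation C := R[i].
Local Notation RE := complex.Re.
Local Notation IM := complex.Im.
Variables (Tp : nat) (nV nW : nat -> nat) (M J : nat).
Local Notation N := (dimPre nV nW Tp.+1).
Local Notation Mx := 'M[C]_N.
Local Notation Tup := ('I_M -> Mx).
Variables (c : 'I_M -> Mx) (a : 'I_J -> 'I_M -> Mx) (b : 'I_J -> R).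
Hypotheses (hc : forall m, herm_op (c m)) (ha : forall j m, herm_op (a j m)).
Variables (Cset : set Tup) (Sset : set Mx).
Hypotheses (hCclosed : tup_closed Cset) (hCconv : tup_convex Cset)
  (hCcone : tup_cone Cset) (hCsub : forall Phi, Cset Phi -> in_CG Phi)
  (hSclosed : mx_closed Sset) (hSconv : mx_convex Sset)
  (hSsub : forall X, Sset X -> in_SG nV nW Tp X).

Definition eta j (Phi : Tup) : R := \sum_(m < M) hs_ip (Phi m) (a j m) - b j.
Definition Pobj (Phi : Tup) : R := \sum_(m < M) hs_ip (Phi m) (c m).
Definition zgen (c' : 'I_M -> Mx) (q : 'I_J -> R) m := c' m - \sum_(j < J) (q j)%:C *: a j m.

Lemma ID (c' : 'I_M -> Mx) (Phi : Tup) (chi : Mx) (q : 'I_J -> R) :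
  \sum_m hs_ip (Phi m) (chi - zgen c' q m) =
  hs_ip (\sum_m Phi m) chi - \sum_m hs_ip (Phi m) (c' m)
  + \sum_j q j * \sum_m hs_ip (Phi m) (a j m).
Proof.
rewrite /zgen hs_ip_suml.
have -> : \sum_j q j * \sum_m hs_ip (Phi m) (a j m) =
          \sum_m \sum_j q j * hs_ip (Phi m) (a j m).
  rewrite exchange_big /=; apply: eq_bigr => j _; by rewrite mulr_sumr.
rewrite -sumrB -big_split /=; apply: eq_bigr => m _.
rewrite hs_ipBr hs_ipBr hs_ip_sumr.
have -> : \sum_j hs_ip (Phi m) ((q j)%:C *: a j m) = \sum_j q j * hs_ip (Phi m) (a j m).
  by apply: eq_bigr => j _; rewrite hs_ipZr.
by ring.
Qed.

Lemma eta_sum j Phi : eta j Phi + b j = \sum_m hs_ip (Phi m) (a j m).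
Proof. by rewrite /eta subrK. Qed.

Lemma lin_lb (g K : R) : (forall k : R, 0 < k -> K <= k * g) -> 0 <= g.
Proof.
move=> h; rewrite leNgt; apply/negP => hg.
have k0 : 0 < (`|K| + 1) / - g by rewrite divr_gt0 ?oppr_gt0 // ltr_pwDr // normr_ge0.
have := h _ k0.
have -> : (`|K| + 1) / - g * g = - (`|K| + 1).
  by field; rewrite ?oppr_eq0 lt_eqF.
move=> hh.
have := ler_norm (- K); rewrite normrN; lra.
Qed.

Lemma from_sep (c' : 'I_M -> Mx) (chi : Mx) (q : 'I_J -> R) (K : R) :
  (exists phi0, Sset phi0) -> (exists Phi0, Cset Phi0) ->
  (forall Phi phi, Cset Phi -> Sset phi ->
     K <= - hs_ip phi chi + \sum_m hs_ip (Phi m) (chi - zgen c' q m) - \sum_j q j * b j) ->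
  (forall Phi, Cset Phi -> 0 <= \sum_m hs_ip (Phi m) (chi - zgen c' q m)) /\
  (forall phi, Sset phi -> hs_ip phi chi + \sum_j q j * b j <= - K).
Proof.
move=> [phi0 hphi0] [Phi0 hPhi0] h; split.
  move=> Phi hPhi; apply: (@lin_lb _ (K + hs_ip phi0 chi + \sum_j q j * b j)) => k k0.
  have := h _ _ (hCcone hPhi (ltW k0)) hphi0.
  have -> : \sum_m hs_ip ((fun m => k%:C *: Phi m) m) (chi - zgen c' q m) =
            k * \sum_m hs_ip (Phi m) (chi - zgen c' q m).
    by rewrite mulr_sumr; apply: eq_bigr => m _; rewrite hs_ipZl.
  lra.
move=> phi hphi; have := h _ _ (hCcone hPhi0 (lexx 0)) hphi.
have -> : \sum_m hs_ip ((fun m => 0%:C *: Phi0 m) m) (chi - zgen c' q m) = 0.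
  by apply: big1 => m _; rewrite hs_ipZl mul0r.
lra.
Qed.

Definition IZ : finType := (((('I_M * 'I_N * 'I_N * bool) + ('I_N * 'I_N * bool)) + 'I_J) + unit)%type.
Definition IY : finType := ((('I_N * 'I_N * bool) + 'I_J) + unit)%type.
Local Notation Z := 'rV[R]_#|{: IZ}|.
Definition cpart (bb : bool) (x : C) : R := if bb then IM x else RE x.
Definition iPhi m (k : ('I_N * 'I_N * bool)%type) : IZ := inl (inl (inl (m, k.1.1, k.1.2, k.2))).
Definition iphi (k : ('I_N * 'I_N * bool)%type) : IZ := inl (inl (inr k)).
Definition iw j : IZ := inl (inr j).
Definition it : IZ := inr tt.

Definition PhiZ (z : Z) : Tup := fun m =>
  \matrix_(i, j) (crd z (iPhi m (i, j, false)) +i* crd z (iPhi m (i, j, true))).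
Definition phiZ (z : Z) : Mx :=
  \matrix_(i, j) (crd z (iphi (i, j, false)) +i* crd z (iphi (i, j, true))).
Definition wZ (z : Z) j := crd z (iw j).
Definition tZ (z : Z) := crd z it.

Definition G (z : Z) (k : IY) : R :=
  match k with
  | inl (inl k') => crd z (iphi k') - \sum_m crd z (iPhi m k')
  | inl (inr j) => crd z (iw j)
  | inr _ => crd z it
  end.
Definition y0 (v : R) (k : IY) : R := match k with inr _ => v | _ => 0 end.
Definition fobj (v : R) (z : Z) : R := \sum_k (G z k - y0 v k) ^+ 2.
Definition Qset : set Z := [set z | Cset (PhiZ z) /\ Sset (phiZ z) /\
   (forall j, eta j (PhiZ z) <= wZ z j) /\ tZ z <= Pobj (PhiZ z)].

Lemma cpartD bb (x y : C) : cpart bb (x + y) = cpart bb x + cpart bb y.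
Proof. by case: bb; rewrite /cpart ?ImD ?ReD. Qed.
Lemma cpartN bb (x : C) : cpart bb (- x) = - cpart bb x.
Proof. by case: bb; rewrite /cpart ?ImN ?ReN. Qed.
Lemma cpart_sum bb (I : Type) (r : seq I) (F : I -> C) :
  cpart bb (\sum_(i <- r) F i) = \sum_(i <- r) cpart bb (F i).
Proof. by case: bb; rewrite /cpart ?Im_sum ?Re_sum. Qed.

Lemma cpart_PhiZ z m (k : ('I_N * 'I_N * bool)%type) :
  cpart k.2 (PhiZ z m k.1.1 k.1.2) = crd z (iPhi m k).
Proof. by case: k => [[i j] []]; rewrite /PhiZ mxE. Qed.
Lemma cpart_phiZ z (k : ('I_N * 'I_N * bool)%type) :
  cpart k.2 (phiZ z k.1.1 k.1.2) = crd z (iphi k).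
Proof. by case: k => [[i j] []]; rewrite /phiZ mxE. Qed.

Lemma mxBE (X Y : Mx) i j : (X - Y) i j = X i j - Y i j.
Proof. by rewrite !mxE. Qed.

Lemma cpart_D z (k : ('I_N * 'I_N * bool)%type) :
  cpart k.2 ((phiZ z - \sum_m PhiZ z m) k.1.1 k.1.2) = G z (inl (inl k)).
Proof.
rewrite /= mxBE summxE cpartD cpartN cpart_sum cpart_phiZ.
by congr (_ - _); apply: eq_bigr => m _; rewrite cpart_PhiZ.
Qed.

Lemma RE_PhiZ z m i j : RE (PhiZ z m i j) = crd z (iPhi m (i, j, false)).
Proof. by rewrite /PhiZ mxE. Qed.
Lemma IM_PhiZ z m i j : IM (PhiZ z m i j) = crd z (iPhi m (i, j, true)).
Proof. by rewrite /PhiZ mxE. Qed.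
Lemma RE_phiZ z i j : RE (phiZ z i j) = crd z (iphi (i, j, false)).
Proof. by rewrite /phiZ mxE. Qed.
Lemma IM_phiZ z i j : IM (phiZ z i j) = crd z (iphi (i, j, true)).
Proof. by rewrite /phiZ mxE. Qed.

Definition encZ (Phi : Tup) (phi : Mx) (w : 'I_J -> R) (t : R) : Z :=
  enc (fun k : IZ => match k with
   | inl (inl (inl p)) => cpart p.2 (Phi p.1.1.1 p.1.1.2 p.1.2)
   | inl (inl (inr p)) => cpart p.2 (phi p.1.1 p.1.2)
   | inl (inr j) => w j
   | inr _ => t end).

Lemma PhiZ_enc Phi phi w t : PhiZ (encZ Phi phi w t) = Phi.
Proof.
apply: funext => m; apply/matrixP => i j.
by rewrite /PhiZ mxE /iPhi !crd_enc /= ReIm_eta.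
Qed.
Lemma phiZ_enc Phi phi w t : phiZ (encZ Phi phi w t) = phi.
Proof.
apply/matrixP => i j.
by rewrite /phiZ mxE /iphi !crd_enc /= ReIm_eta.
Qed.
Lemma wZ_enc Phi phi w t : wZ (encZ Phi phi w t) = w.
Proof. by apply: funext => j; rewrite /wZ crd_enc. Qed.
Lemma tZ_enc Phi phi w t : tZ (encZ Phi phi w t) = t.
Proof. by rewrite /tZ crd_enc. Qed.

Lemma cplx_comb (s x1 y1 x2 y2 : R) :
  (s * x1 + (1 - s) * x2) +i* (s * y1 + (1 - s) * y2) =
  s%:C * (x1 +i* y1) + (1 - s)%:C * (x2 +i* y2).
Proof. by apply/eqP; rewrite eq_complex /= !mul0r !subr0 !addr0 !eqxx. Qed.

Lemma PhiZ_comb s (z1 z2 : Z) m :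
  PhiZ (s *: z1 + (1 - s) *: z2) m = s%:C *: PhiZ z1 m + (1 - s)%:C *: PhiZ z2 m.
Proof.
by apply/matrixP => i j; rewrite /PhiZ !mxE !crd_comb cplx_comb.
Qed.
Lemma phiZ_comb s (z1 z2 : Z) :
  phiZ (s *: z1 + (1 - s) *: z2) = s%:C *: phiZ z1 + (1 - s)%:C *: phiZ z2.
Proof.
by apply/matrixP => i j; rewrite /phiZ !mxE !crd_comb cplx_comb.
Qed.

Lemma hs_comb (s : R) (X Y A : Mx) :
  hs_ip (s%:C *: X + (1 - s)%:C *: Y) A = s * hs_ip X A + (1 - s) * hs_ip Y A.
Proof. by rewrite hs_ipDl !hs_ipZl. Qed.

Lemma eta_comb s z1 z2 j :
  eta j (PhiZ (s *: z1 + (1 - s) *: z2)) = s * eta j (PhiZ z1) + (1 - s) * eta j (PhiZ z2).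
Proof.
rewrite /eta; under eq_bigr do rewrite PhiZ_comb hs_comb.
rewrite big_split /= -!mulr_sumr; ring.
Qed.
Lemma Pobj_comb s z1 z2 :
  Pobj (PhiZ (s *: z1 + (1 - s) *: z2)) = s * Pobj (PhiZ z1) + (1 - s) * Pobj (PhiZ z2).
Proof.
rewrite /Pobj; under eq_bigr do rewrite PhiZ_comb hs_comb.
by rewrite big_split /= -!mulr_sumr.
Qed.

Lemma G_comb s z1 z2 k : G (s *: z1 + (1 - s) *: z2) k = s * G z1 k + (1 - s) * G z2 k.
Proof.
case: k => [[k|j]|u] /=; rewrite ?crd_comb //.
under eq_bigr do rewrite crd_comb.
rewrite big_split /= -!mulr_sumr; ring.
Qed.

Lemma Qset_conv z1 z2 s : Qset z1 -> Qset z2 -> 0 <= s -> s <= 1 ->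
  Qset (s *: z1 + (1 - s) *: z2).
Proof.
move=> [C1 [S1 [E1 T1]]] [C2 [S2 [E2 T2]]] s0 s1; split; [|split; [|split]].
- have -> : PhiZ (s *: z1 + (1 - s) *: z2) =
           (fun m => s%:C *: PhiZ z1 m + (1 - s)%:C *: PhiZ z2 m).
    by apply: funext => m; rewrite PhiZ_comb.
  exact: hCconv.
- by rewrite phiZ_comb; apply: hSconv.
- move=> j; rewrite eta_comb /wZ crd_comb.
  have := E1 j; have := E2 j; rewrite /wZ => h2 h1.
  by apply: lerD; apply: ler_wpM2l => //; rewrite subr_ge0.
- rewrite Pobj_comb /tZ crd_comb; move: T1 T2; rewrite /tZ => h1 h2.
  by apply: lerD; apply: ler_wpM2l => //; rewrite subr_ge0.
Qed.

Lemma contB (f g : Z -> R) : continuous f -> continuous g -> continuous (fun z => f z - g z).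
Proof. by move=> hf hg z; exact: (continuousB (hf z) (hg z)). Qed.
Lemma contM (f g : Z -> R) : continuous f -> continuous g -> continuous (fun z => f z * g z).
Proof. by move=> hf hg z; exact: (continuousM (hf z) (hg z)). Qed.
Lemma contC (x : R) : continuous (fun z : Z => x).
Proof. by move=> z; exact: cst_continuous. Qed.
Lemma cont_sum (I : Type) (r : seq I) (F : I -> Z -> R) :
  (forall i, continuous (F i)) -> continuous (fun z => \sum_(i <- r) F i z).
Proof. by move=> h; apply: continuous_big => //; exact: add_continuous. Qed.

Lemma cont_hs m (A : Mx) : continuous (fun z : Z => hs_ip (PhiZ z m) A).
Proof.
have -> : (fun z : Z => hs_ip (PhiZ z m) A) = (fun z => \sum_i \sum_k
   (crd z (iPhi m (i, k, false)) * RE (A k i) - crd z (iPhi m (i, k, true)) * IM (A k i))).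
  apply: funext => z; rewrite hs_ipE2; apply: eq_bigr => i _; apply: eq_bigr => k _.
  by rewrite RE_PhiZ IM_PhiZ.
apply: cont_sum => i; apply: cont_sum => k.
by apply: contB; apply: contM; try exact: crd_cont; exact: contC.
Qed.

Lemma cont_eta j : continuous (fun z : Z => eta j (PhiZ z)).
Proof.
apply: contB; last exact: contC.
by apply: cont_sum => m; exact: cont_hs.
Qed.

Lemma cont_Pobj : continuous (fun z : Z => Pobj (PhiZ z)).
Proof. by apply: cont_sum => m; exact: cont_hs. Qed.

Lemma cont_G k : continuous (fun z : Z => G z k).
Proof.
case: k => [[k|j]|u] /=; try exact: crd_cont.
apply: contB; first exact: crd_cont.
by apply: cont_sum => m; exact: crd_cont.
Qed.

Lemma cont_fobj v : continuous (fobj v).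
Proof.
apply: cont_sum => k.
have -> : (fun z => (G z k - y0 v k) ^+ 2) = (fun z => (G z k - y0 v k) * (G z k - y0 v k)).
  by apply: funext => z'; rewrite expr2.
by apply: contM; apply: contB; [exact: cont_G|exact: contC|exact: cont_G|exact: contC].
Qed.

Lemma closed_leq (f g : Z -> R) : continuous f -> continuous g -> closed [set z | f z <= g z].
Proof.
move=> hf hg.
have -> : [set z | f z <= g z] = (fun z => g z - f z) @^-1` [set x | 0 <= x].
  by apply/seteqP; split => z /=; rewrite subr_ge0.
apply: preimage_closed; last exact: closed_ge.
by move=> z _; apply: contB.
Qed.

Lemma closed_forall (I : Type) (P : I -> set Z) :
  (forall j, closed (P j)) -> closed [set z | forall j, P j z].
Proof.
move=> h.
have -> : [set z | forall j, P j z] = \bigcap_(j in [set: I]) P j.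
  by apply/seteqP; split => z /= hz j //; apply: hz.
by apply: closed_bigI => j _.
Qed.

Lemma cdiff_lt (z z' : Z) (e : R) (i : bool -> IZ) : 0 < e ->
  (forall k, `|crd z k - crd z' k| < e / 2) ->
  `|(crd z (i false) +i* crd z (i true)) - (crd z' (i false) +i* crd z' (i true))| < e%:C.
Proof. by move=> e0 h; apply: cnorm_lt => //=; rewrite ?h. Qed.

Lemma closed_Q1 : closed [set z : Z | Cset (PhiZ z)].
Proof.
apply: closed_approx => z hz; apply: hCclosed => e e0.
have e2 : 0 < e / 2 by rewrite divr_gt0.
have [z' hz' hc'] := hz (e / 2) e2.
exists (PhiZ z') => // m i j; rewrite /PhiZ !mxE.
exact: (cdiff_lt (fun bb => iPhi m (i, j, bb)) e0 hc').
Qed.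

Lemma closed_Q2 : closed [set z : Z | Sset (phiZ z)].
Proof.
apply: closed_approx => z hz; apply: hSclosed => e e0.
have e2 : 0 < e / 2 by rewrite divr_gt0.
have [z' hz' hc'] := hz (e / 2) e2.
exists (phiZ z') => // i j; rewrite /phiZ !mxE.
exact: (cdiff_lt (fun bb => iphi (i, j, bb)) e0 hc').
Qed.

Lemma closed_Q : closed Qset.
Proof.
change (closed ([set z : Z | Cset (PhiZ z)] `&` ([set z : Z | Sset (phiZ z)] `&`
  ([set z | forall j, [set z : Z | eta j (PhiZ z) <= wZ z j] z] `&`
   [set z : Z | tZ z <= Pobj (PhiZ z)])))).
apply: closedI; first exact: closed_Q1.
apply: closedI; first exact: closed_Q2.
apply: closedI.
  apply: closed_forall => j; apply: closed_leq; first exact: cont_eta.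
  exact: crd_cont.
by apply: closed_leq; [exact: crd_cont|exact: cont_Pobj].
Qed.

Lemma sq_le (x F : R) : x ^+ 2 <= F -> `|x| <= 1 + F.
Proof.
move=> h; have F0 : 0 <= F by apply: le_trans h; exact: sqr_ge0.
rewrite ler_norml; apply/andP; split; nra.
Qed.

Lemma term_le v z k : (G z k - y0 v k) ^+ 2 <= fobj v z.
Proof.
rewrite /fobj (bigD1 k) //= lerDl; apply: sumr_ge0 => l _; exact: sqr_ge0.
Qed.

Lemma Q_bound v z (F0 : R) : Qset z -> fobj v z <= F0 ->
  forall k, `|crd z k| <= trcR nW Tp + (1 + F0) + `|v|.
Proof.
move=> [hC [hS [hE hT]]] hf.
have hG k : `|G z k - y0 v k| <= 1 + F0 by apply: sq_le; apply: le_trans hf; exact: term_le.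
have F0ge : 0 <= F0 by apply: le_trans hf; apply: sumr_ge0 => l _; exact: sqr_ge0.
have Bs0 := trcR_ge0 R nW Tp.
have v0 := normr_ge0 v.
have [_ hSb] := SG_props (hSsub hS).
have hphi (k : ('I_N * 'I_N * bool)%type) : `|crd z (iphi k)| <= trcR nW Tp.
  rewrite -cpart_phiZ; case: k => [[i j] []] /=; by case: (hSb i j).
case=> [[[k|k]|j]|u].
-
  have hPSD : forall m, psd_op (PhiZ z m) by move=> m; exact: (hCsub hC m).
  have hdiag i : RE ((\sum_m PhiZ z m) i i) <= trcR nW Tp + (1 + F0).
    have hD := hG (inl (inl (i, i, false))).
    rewrite /= subr0 in hD.
    have := cpart_D z (i, i, false); rewrite /= => hcD.
    rewrite -hcD mxBE ReB in hD.
    have := hSb i i => -[hre _].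
    move: hD hre; rewrite !ler_norml => /andP[h1 h2] /andP[h3 h4]; lra.
  have := psd_tuple_bound hPSD hdiag.
  case: k => [[[m i] j] bb] hb.
  have := cpart_PhiZ z m (i, j, bb); rewrite /= => <-.
  case: (hb m i j) => h1 h2; case: bb; rewrite /cpart; lra.
- have := hphi k; lra.
- have := hG (inl (inr j)); rewrite /= subr0 => h; rewrite /iw in h; lra.
- have := hG (inr tt); rewrite /= => h.
  have : `|crd z it| <= `|crd z it - v| + `|v|.
    by apply: le_trans (ler_normD _ _); rewrite subrK.
  case: u; rewrite /it in h *; lra.
Qed.

Lemma exists_zs v z0 : Qset z0 ->
  exists2 zs, Qset zs & forall z, Qset z -> fobj v zs <= fobj v z.
Proof.
move=> hz0.
have F0ge : 0 <= fobj v z0 by apply: sumr_ge0 => l _; exact: sqr_ge0.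
apply: (@exists_min _ _ Qset (fobj v) z0 (trcR nW Tp + (1 + fobj v z0) + `|v|)).
- exact: closed_Q.
- exact: hz0.
- exact: cont_fobj.
- by rewrite !addr_ge0 ?trcR_ge0.
- move=> z hz hf r; rewrite crd_all; exact: Q_bound.
Qed.

Lemma near_main v zs : Qset zs -> (forall z, Qset z -> fobj v zs <= fobj v z) ->
  forall z, Qset z -> 0 <= \sum_k (G z k - G zs k) * (G zs k - y0 v k).
Proof.
move=> hzs hmin.
apply: (@near_ineq R _ _ Qset (fun s z zs => s *: z + (1 - s) *: zs)).
- by move=> z hz s s0 s1; apply: Qset_conv => //; exact: ltW.
- by move=> z s k; rewrite G_comb.
- exact: hmin.
Qed.

Lemma sum_cpart (X Y : Mx) :
  \sum_(k : ('I_N * 'I_N * bool)%type) cpart k.2 (X k.1.1 k.1.2) * cpart k.2 (Y k.1.1 k.1.2) =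
  \sum_i \sum_j (RE (X i j) * RE (Y i j) + IM (X i j) * IM (Y i j)).
Proof.
rewrite -(pair_bigA _ (fun ij bb => cpart bb (X ij.1 ij.2) * cpart bb (Y ij.1 ij.2))) /=.
rewrite (pair_bigA _ (fun i j => RE (X i j) * RE (Y i j) + IM (X i j) * IM (Y i j))) /=.
by apply: eq_bigr => -[i j] _; rewrite big_bool /= addrC.
Qed.

Lemma adjmxB (X Y : Mx) : adjmx (X - Y) = adjmx X - adjmx Y.
Proof. by apply/matrixP => i j; rewrite !mxE rmorphB. Qed.
Lemma adjmx_sum (I : finType) (F : I -> Mx) : adjmx (\sum_m F m) = \sum_m adjmx (F m).
Proof.
by apply/matrixP => i j; rewrite !mxE !summxE rmorph_sum; apply: eq_bigr => m _; rewrite !mxE.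
Qed.
Lemma adjmxD (X Y : Mx) : adjmx (X + Y) = adjmx X + adjmx Y.
Proof. by apply/matrixP => i j; rewrite !mxE rmorphD. Qed.
Lemma hermD (X Y : Mx) : herm_op X -> herm_op Y -> herm_op (X + Y).
Proof. by rewrite /herm_op adjmxD => -> ->. Qed.
Lemma hermB (X Y : Mx) : herm_op X -> herm_op Y -> herm_op (X - Y).
Proof. by rewrite /herm_op adjmxB => -> ->. Qed.
Lemma herm_sum (I : finType) (F : I -> Mx) : (forall m, herm_op (F m)) -> herm_op (\sum_m F m).
Proof. by move=> h; rewrite /herm_op adjmx_sum; apply: eq_bigr => m _; exact: h. Qed.
Lemma conj_realC (r : R) : conjc (r%:C) = r%:C.
Proof. by apply/eqP; rewrite eq_complex /= oppr0 !eqxx. Qed.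
Lemma hermZ (r : R) (X : Mx) : herm_op X -> herm_op (r%:C *: X).
Proof.
move=> h; apply/matrixP => i j; rewrite adjmxE !mxE conjcM -(herm_entry j i h).
by rewrite conj_realC.
Qed.

Lemma sum_unit (F : unit -> R) : \sum_(u : unit) F u = F tt.
Proof. by rewrite (big_pred1 tt) // => -[]. Qed.

Lemma sumIY (F : IY -> R) :
  \sum_k F k = \sum_(k' : ('I_N * 'I_N * bool)%type) F (inl (inl k')) + \sum_j F (inl (inr j)) + F (inr tt).
Proof. by rewrite big_sumType /= big_sumType /= sum_unit. Qed.

Lemma sum_cpart_hs (X Y : Mx) : herm_op Y ->
  \sum_(k : ('I_N * 'I_N * bool)%type) cpart k.2 (X k.1.1 k.1.2) * cpart k.2 (Y k.1.1 k.1.2) = hs_ip X Y.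
Proof. by move=> hY; rewrite sum_cpart hs_ip_herm. Qed.

Lemma encQ Phi phi w t : Cset Phi -> Sset phi -> (forall j, eta j Phi <= w j) -> t <= Pobj Phi ->
  Qset (encZ Phi phi w t).
Proof.
move=> h1 h2 h3 h4; rewrite /Qset /= PhiZ_enc phiZ_enc wZ_enc tZ_enc; split => //.
Qed.

Lemma G_D z (k : ('I_N * 'I_N * bool)%type) :
  G z (inl (inl k)) = cpart k.2 ((phiZ z - \sum_m PhiZ z m) k.1.1 k.1.2).
Proof. by rewrite cpart_D. Qed.

Lemma sep_ineq v zs : Qset zs -> (forall z, Qset z -> fobj v zs <= fobj v z) ->
  herm_op (phiZ zs - \sum_m PhiZ zs m) /\
  fobj v zs = hs_ip (phiZ zs - \sum_m PhiZ zs m) (phiZ zs - \sum_m PhiZ zs m)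
              + \sum_j wZ zs j ^+ 2 + (tZ zs - v) ^+ 2 /\
  forall Phi phi w t, Cset Phi -> Sset phi -> (forall j, eta j Phi <= w j) -> t <= Pobj Phi ->
   fobj v zs - (v - tZ zs) * v <=
   hs_ip (phi - \sum_m Phi m) (phiZ zs - \sum_m PhiZ zs m) + \sum_j w j * wZ zs j - (v - tZ zs) * t.
Proof.
move=> hzs hmin.
set Ds := phiZ zs - \sum_m PhiZ zs m.
have hDs : herm_op Ds.
  case: hzs => hC [hS _]; apply: hermB; first by case: (SG_props (hSsub hS)).
  by apply: herm_sum => m; case: (hCsub hC m).
have hf : fobj v zs = hs_ip Ds Ds + \sum_j wZ zs j ^+ 2 + (tZ zs - v) ^+ 2.
  rewrite /fobj sumIY -(sum_cpart_hs Ds hDs) /=.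
  congr (_ + _ + _).
    by apply: eq_bigr => k _; rewrite cpart_D subr0 expr2.
  by apply: eq_bigr => j _; rewrite subr0.
split => //; split => // Phi phi w t h1 h2 h3 h4.
have := near_main hzs hmin (encQ h1 h2 h3 h4).
rewrite sumIY /=.
set z := encZ Phi phi w t.
have e1 : \sum_(k : ('I_N * 'I_N * bool)%type)
    (crd z (iphi k) - \sum_m crd z (iPhi m k) - G zs (inl (inl k))) * (G zs (inl (inl k)) - 0)
   = hs_ip (phi - \sum_m Phi m) Ds - hs_ip Ds Ds.
  rewrite -(sum_cpart_hs _ hDs) -(sum_cpart_hs Ds hDs) -sumrB; apply: eq_bigr => k _.
  have -> : crd z (iphi k) - \sum_m crd z (iPhi m k) = G z (inl (inl k)) by [].
  rewrite !G_D /z PhiZ_enc phiZ_enc subr0; ring.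
have e2 : \sum_j (crd z (iw j) - crd zs (iw j)) * (crd zs (iw j) - 0)
   = \sum_j w j * wZ zs j - \sum_j wZ zs j ^+ 2.
  rewrite -sumrB; apply: eq_bigr => j _.
  have -> : crd z (iw j) = w j by rewrite /z crd_enc.
  rewrite /wZ subr0; ring.
have e3 : crd z it = t by rewrite /z crd_enc.
rewrite e1 e2 e3 hf /tZ; lra.
Qed.

Definition DS (chq : Mx * ('I_J -> R)) : \bar R :=
  (support_fun Sset chq.1 + (\sum_(j < J) chq.2 j * b j)%:E)%E.

Lemma support_le (chi : Mx) (r v : R) : (forall phi, Sset phi -> hs_ip phi chi + r <= v) ->
  (support_fun Sset chi + r%:E <= v%:E)%E.
Proof.
move=> h.
have : (support_fun Sset chi <= (v - r)%:E)%E.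
  apply: ge_ereal_sup => x [phi hphi <-]; rewrite lee_fin.
  by have := h _ hphi; lra.
by move=> /(leeD2r r%:E); rewrite -EFinD subrK.
Qed.

Lemma zgen_herm c' q m : herm_op (c' m) -> herm_op (zgen c' q m).
Proof.
move=> h; apply: hermB => //; apply: herm_sum => j; apply: hermZ; exact: ha.
Qed.

Lemma hs_self_eq0 (X : Mx) : herm_op X -> hs_ip X X = 0 -> X = 0.
Proof.
move=> hX; rewrite hs_ip_herm // => h0.
have hge2 i k : 0 <= RE (X i k) * RE (X i k) + IM (X i k) * IM (X i k).
  by rewrite addr_ge0 // -expr2 sqr_ge0.
have hge i : 0 <= \sum_k (RE (X i k) * RE (X i k) + IM (X i k) * IM (X i k)).
  by apply: sumr_ge0 => k _.
have h1 := psumr_eq0P (fun i _ => hge i) h0.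
apply/matrixP => i j.
have h2 := psumr_eq0P (fun k _ => hge2 i k) (h1 i isT).
have := h2 j isT; rewrite -!expr2 => e.
have e1 : RE (X i j) = 0.
  apply/eqP; rewrite -sqrf_eq0 eq_le sqr_ge0 andbT -e lerDl sqr_ge0 //.
have e2 : IM (X i j) = 0.
  apply/eqP; rewrite -sqrf_eq0 eq_le sqr_ge0 andbT -e lerDr sqr_ge0 //.
by rewrite mxE -[X i j]ReIm_eta e1 e2.
Qed.

Lemma dual_approx v :
  (exists Phi0, Cset Phi0 /\ Sset (\sum_m Phi0 m)) ->
  (forall Phi, Cset Phi -> Sset (\sum_m Phi m) -> (forall j, eta j Phi <= 0) -> Pobj Phi < v) ->
  exists chq : Mx * ('I_J -> R), [/\ herm_op chq.1, (forall j, 0 <= chq.2 j),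
     dual_cone Cset (fun m => chq.1 - zgen c chq.2 m) & (DS chq <= v%:E)%E].
Proof.
move=> [Phi0 [hC0 hS0]] hfeas.
have hz0 := encQ hC0 hS0 (fun j => lexx (eta j Phi0)) (lexx (Pobj Phi0)).
have [zs hzs hmin] := exists_zs v hz0.
have [hDs [hf hsep]] := sep_ineq hzs hmin.
set Ds := phiZ zs - \sum_m PhiZ zs m in hDs hf hsep.
set ws := wZ zs in hf hsep.
set ts := tZ zs in hf hsep.
set delta := fobj v zs in hf hsep.
case: (hzs) => hCs [hSs [hEs hTs]].
have hDD : 0 <= hs_ip Ds Ds.
  rewrite hs_ip_herm //; apply: sumr_ge0 => i _; apply: sumr_ge0 => j _.
  by rewrite addr_ge0 // -expr2 sqr_ge0.
have hW : 0 <= \sum_j ws j ^+ 2 by apply: sumr_ge0 => j _; exact: sqr_ge0.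
have hT := sqr_ge0 (ts - v).
have dpos : 0 < delta.
  rewrite lt_neqAle; apply/andP; split; last by rewrite hf; lra.
  apply/negP => /eqP d0.
  have eD : hs_ip Ds Ds = 0 by lra.
  have eT : (ts - v) ^+ 2 = 0 by lra.
  have eW : \sum_j ws j ^+ 2 = 0 by lra.
  have Ds0 := hs_self_eq0 hDs eD.
  have ephi : phiZ zs = \sum_m PhiZ zs m by apply/eqP; rewrite -subr_eq0; apply/eqP.
  have ets : ts = v by move: eT => /eqP; rewrite sqrf_eq0 subr_eq0 => /eqP.
  have ew j : ws j = 0.
    have h2 := psumr_eq0P (fun i _ => sqr_ge0 (ws i)) eW.
    have := h2 j isT.
    by move=> /eqP; rewrite sqrf_eq0 => /eqP.
  have := hfeas (PhiZ zs) hCs; rewrite -ephi => /(_ hSs).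
  have : forall j, eta j (PhiZ zs) <= 0 by move=> j; rewrite -(ew j); exact: hEs.
  move=> h /(_ h); rewrite -ets; move: hTs; rewrite /ts; lra.
have hss : phiZ zs - \sum_m PhiZ zs m = Ds by [].
have hWW : \sum_j ws j * ws j = \sum_j ws j ^+ 2 by apply: eq_bigr => j _; rewrite expr2.
set beta := v - ts.
have bge0 : 0 <= beta.
  have := hsep _ _ ws (ts - 1) hCs hSs hEs.
  have ht1 : ts - 1 <= Pobj (PhiZ zs) by move: hTs; rewrite /ts; lra.
  rewrite hss hWW => /(_ ht1).
  rewrite hf /beta; nra.
have wge0 j : 0 <= ws j.
  pose w l := ws l + (l == j)%:R.
  have hw : forall l, eta l (PhiZ zs) <= w l.
    by move=> l; apply: le_trans (hEs l) _; rewrite /w lerDl ler0n.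
  have := hsep _ _ w ts hCs hSs hw hTs.
  have -> : \sum_l w l * ws l = \sum_l ws l ^+ 2 + ws j.
    rewrite /w; under eq_bigr do rewrite mulrDl.
    rewrite big_split /= hWW; congr (_ + _); rewrite (bigD1 j) //= eqxx mul1r big1 ?addr0 // => l /negbTE ->.
    by rewrite mul0r.
  rewrite hss hf /beta; nra.
have hsep2 Phi phi : Cset Phi -> Sset phi ->
    delta - beta * v <= hs_ip (phi - \sum_m Phi m) Ds + \sum_j eta j Phi * ws j - beta * Pobj Phi.
  move=> h1 h2; exact: hsep h1 h2 (fun j => lexx _) (lexx _).
have hneS : exists phi0, Sset phi0 by exists (\sum_m Phi0 m).
have hneC : exists Phi, Cset Phi by exists Phi0.
have hX12 Phi phi : hs_ip (phi - \sum_m Phi m) Ds = hs_ip phi Ds - hs_ip (\sum_m Phi m) Ds.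
  exact: hs_ipBl.
have [bpos|b0] : 0 < beta \/ beta = 0.
  by move: bge0; rewrite le_eqVlt => /orP[/eqP <-|->]; [right|left].
-
  pose chi := (- beta^-1)%:C *: Ds.
  pose q := fun j => ws j / beta.
  have hbne : beta != 0 by rewrite gt_eqF.
  have H : forall Phi phi, Cset Phi -> Sset phi ->
     delta / beta - v <= - hs_ip phi chi + \sum_m hs_ip (Phi m) (chi - zgen c q m)
                          - \sum_j q j * b j.
    move=> Phi phi h1 h2.
    rewrite ID -/(Pobj Phi) /chi !hs_ipZr.
    have eq1 : \sum_j q j * \sum_m hs_ip (Phi m) (a j m) - \sum_j q j * b j =
               beta^-1 * \sum_j eta j Phi * ws j.
      rewrite -sumrB mulr_sumr; apply: eq_bigr => j _; rewrite -eta_sum /q.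
      by field.
    have := hsep2 _ _ h1 h2; rewrite hX12 => hh.
    have ibpos : 0 <= beta^-1 by rewrite invr_ge0 ltW.
    have := ler_wpM2l ibpos hh.
    have -> : beta^-1 * (delta - beta * v) = delta / beta - v by field.
    have -> : beta^-1 * (hs_ip phi Ds - hs_ip (\sum_m Phi m) Ds + \sum_j eta j Phi * ws j
                - beta * Pobj Phi) =
              beta^-1 * hs_ip phi Ds - beta^-1 * hs_ip (\sum_m Phi m) Ds
              + beta^-1 * \sum_j eta j Phi * ws j - Pobj Phi by field.
    move: eq1; lra.
  have [hfe hval] := from_sep hneS hneC H.
  exists (chi, q); split => /=.
  + by apply: hermZ.
  + by move=> j; rewrite /q divr_ge0 // ltW.
  + split; last exact: hfe.
    move=> m; apply: hermB; first exact: hermZ.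
    by apply: zgen_herm.
  + apply: support_le => phi hphi; have := hval _ hphi.
    have : 0 < delta / beta by rewrite divr_gt0.
    lra.
-
  pose chi' := (-1)%:C *: Ds.
  have H : forall Phi phi, Cset Phi -> Sset phi ->
     delta <= - hs_ip phi chi' + \sum_m hs_ip (Phi m) (chi' - zgen (fun=> 0) ws m)
                          - \sum_j ws j * b j.
    move=> Phi phi h1 h2.
    rewrite ID /chi' !hs_ipZr.
    have -> : \sum_m hs_ip (Phi m) 0 = 0 by apply: big1 => m _; exact: hs_ip0r.
    have eq1 : \sum_j ws j * \sum_m hs_ip (Phi m) (a j m) - \sum_j ws j * b j =
               \sum_j eta j Phi * ws j.
      rewrite -sumrB; apply: eq_bigr => j _; rewrite -eta_sum; ring.
    have := hsep2 _ _ h1 h2; rewrite hX12 b0 !mul0r !subr0 => hh.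
    move: eq1; lra.
  have [hfe hval] := from_sep hneS hneC H.
  pose lam := \sum_m nrm1 (c m).
  pose chi0 : Mx := (lam%:C)%:M.
  pose B0 := trcR nW Tp * nrm1 chi0.
  pose sc := `|B0 - v| / delta.
  have sc0 : 0 <= sc by rewrite divr_ge0 // ltW.
  pose chi := chi0 + sc%:C *: chi'.
  pose q := fun j => sc * ws j.
  exists (chi, q); split => /=.
  + by apply: hermD; [exact: herm_scalar|apply: hermZ; apply: hermZ].
  + by move=> j; rewrite /q mulr_ge0.
  + split.
      move=> m; apply: hermB; first by apply: hermD; [exact: herm_scalar|apply: hermZ; apply: hermZ].
      by apply: zgen_herm.
    move=> Phi hPhi.
    have hpsd : forall m, psd_op (Phi m) by move=> m; exact: (hCsub hPhi m).
    have h0 := chi0_feas c hpsd.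
    rewrite -/lam -/chi0 in h0.
    have h0' : 0 <= hs_ip (\sum_m Phi m) chi0 - Pobj Phi.
      move: h0; rewrite (eq_bigr (fun m => hs_ip (Phi m) chi0 - hs_ip (Phi m) (c m))).
        by rewrite sumrB hs_ip_suml.
      by move=> m _; rewrite hs_ipBr.
    have h1 := hfe _ hPhi; rewrite ID in h1.
    have e0 : \sum_m hs_ip (Phi m) 0 = 0 by apply: big1 => m _; exact: hs_ip0r.
    rewrite e0 in h1.
    rewrite ID -/(Pobj Phi) /chi hs_ipDr hs_ipZr.
    have -> : \sum_j q j * \sum_m hs_ip (Phi m) (a j m) =
              sc * \sum_j ws j * \sum_m hs_ip (Phi m) (a j m).
      by rewrite mulr_sumr; apply: eq_bigr => j _; rewrite /q mulrA.
    have := mulr_ge0 sc0 h1; rewrite subr0 mulrDr; lra.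
  + apply: support_le => phi hphi.
    have := hval _ hphi.
    have [_ hb] := SG_props (hSsub hphi).
    have hB0 : `|hs_ip phi chi0| <= B0 by apply: hs_bound.
    rewrite /chi hs_ipDr hs_ipZr.
    have -> : \sum_j q j * b j = sc * \sum_j ws j * b j.
      by rewrite mulr_sumr; apply: eq_bigr => j _; rewrite /q mulrA.
    move=> hv.
    have := ler_wpM2l sc0 hv.
    have -> : sc * - delta = - `|B0 - v| by rewrite /sc mulrN divfK // gt_eqF.
    have := ler_norm (B0 - v); have := ler_norm (hs_ip phi chi0).
    rewrite ler_norml in hB0; move: hB0 => /andP[_ hB0].
    rewrite mulrDr /chi' !hs_ipZr; lra.
Qed.

Variable Tset : set Tup.
Hypotheses (hT0 : Tset !=set0) (hTsub : forall Phi, Tset Phi -> in_TG nV nW Tp M Phi)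
  (hTbar : tup_closure Tset = [set Phi | Cset Phi /\ Sset (\sum_(m < M) Phi m)]).

Definition Pset := [set Phi | Tset Phi /\ forall j, eta j Phi <= 0].
Definition Dset := [set chq : Mx * ('I_J -> R) |
                 herm_op chq.1 /\ (forall j, 0 <= chq.2 j) /\
                 dual_cone Cset (fun m => chq.1 - zgen c chq.2 m)].

Lemma in_closure (A : set Tup) Phi : A Phi -> tup_closure A Phi.
Proof. by move=> h e e0; exists Phi => // m i j; rewrite subrr normr0 ltcR. Qed.

Lemma T_CS Phi : Tset Phi -> Cset Phi /\ Sset (\sum_m Phi m).
Proof. by move=> h; have := in_closure h; rewrite hTbar. Qed.

Lemma clos_P (v0 : R) Phi : tup_closure Pset Phi -> (forall Psi, Pset Psi -> Pobj Psi <= v0) ->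
  Pobj Phi <= v0.
Proof.
move=> hcl hub; apply/ler_addgt0Pr => e e0.
pose lam := \sum_m nrm1 (c m).
have lam0 : 0 <= lam by apply: sumr_ge0 => m _; exact: nrm1_ge0.
have e1 : 0 < e / (lam + 1) by rewrite divr_gt0 // ltr_wpDl.
have [Psi hPsi hclose] := hcl _ e1.
have hd : Pobj Phi - Pobj Psi <= e / (lam + 1) * lam.
  rewrite /Pobj -sumrB mulr_sumr; apply: ler_sum => m _.
  rewrite -hs_ipBl; apply: le_trans (ler_norm _) _; apply: hs_bound => i k.
  have [h1 h2] := cnorm_lt_inv (hclose m i k).
  by rewrite mxBE; split; [exact: ltW h1|exact: ltW h2].
have : e / (lam + 1) * lam <= e.
  rewrite mulrAC ler_pdivrMr ?ltr_wpDl //; apply: ler_wpM2l; [exact: ltW|lra].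
have := hub _ hPsi; lra.
Qed.

Lemma weak Phi chq : Pset Phi -> Dset chq -> ((Pobj Phi)%:E <= DS chq)%E.
Proof.
case: chq => chi q /= [hT hE] [hH [hq [_ hdc]]].
have [hC hS] := T_CS hT.
have := hdc _ hC; rewrite ID -/(Pobj Phi) => h0.
have hqe : \sum_j q j * (eta j Phi + b j) <= \sum_j q j * b j.
  rewrite -subr_ge0 -sumrB; apply: sumr_ge0 => j _.
  have h := mulr_ge0_le0 (hq j) (hE j); rewrite [in X in _ <= X]mulrDr; move: h => /= h; lra.
have hP : Pobj Phi <= hs_ip (\sum_m Phi m) chi + \sum_j q j * b j.
  move: hqe; under eq_bigr do rewrite eta_sum; lra.
rewrite /DS /=; apply: le_trans (_ : (hs_ip (\sum_m Phi m) chi + \sum_j q j * b j)%:E <= _)%E.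
  by rewrite lee_fin.
rewrite EFinD; apply: leeD2r; apply: ereal_sup_ubound; by exists (\sum_m Phi m).
Qed.

Lemma final : tup_closure Pset = [set Phi | tup_closure Tset Phi /\ forall j, eta j Phi <= 0] ->
  ereal_sup [set (Pobj Phi)%:E | Phi in Pset] = ereal_inf [set DS chq | chq in Dset].
Proof.
move=> hPcl.
have hne : exists Phi0, Cset Phi0 /\ Sset (\sum_m Phi0 m).
  by case: hT0 => Phi0 h; exists Phi0; exact: T_CS.
have hfeas Phi : Cset Phi -> Sset (\sum_m Phi m) -> (forall j, eta j Phi <= 0) ->
    tup_closure Pset Phi.
  by move=> h1 h2 h3; rewrite hPcl; split => //; rewrite hTbar.
apply/eqP; rewrite eq_le; apply/andP; split.
  apply: ge_ereal_sup => x [Phi hPhi <-]; apply: le_ereal_inf_tmp => y [chq hchq <-].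
  exact: weak.
set sp := ereal_sup _.
have hub Psi : Pset Psi -> ((Pobj Psi)%:E <= sp)%E.
  by move=> h; apply: ereal_sup_ubound; exists Psi.
have inf_le (v : R) : (forall Phi, Cset Phi -> Sset (\sum_m Phi m) -> (forall j, eta j Phi <= 0) ->
    Pobj Phi < v) -> (ereal_inf [set DS chq | chq in Dset] <= v%:E)%E.
  move=> h; have [chq [h1 h2 h3 h4]] := dual_approx hne h.
  apply: (le_trans _ h4); apply: ereal_inf_lbound; exists chq => //.
clearbody sp.
case E : sp => [r| |]; last 2 first.
- by rewrite leey.
-
  have Pe Psi : ~ Pset Psi by move=> h; have := hub _ h; rewrite E.
  have hv : forall v : R, (ereal_inf [set DS chq | chq in Dset] <= v%:E)%E.
    move=> v; apply: inf_le => Phi h1 h2 h3.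
    have [Psi hPsi _] := hfeas _ h1 h2 h3 1 ltr01.
    by case: (Pe _ hPsi).
  case F : (ereal_inf _) => [r'| |] //.
    by have := hv (r' - 1); rewrite F lee_fin lerBrDr gerDl ler10.
  by have := hv 0; rewrite F.
- apply/lee_addgt0Pr => e e0.
  rewrite -EFinD; apply: inf_le => Phi h1 h2 h3.
  have : Pobj Phi <= r.
    apply: (clos_P (hfeas _ h1 h2 h3)) => Psi hPsi.
    by have := hub _ hPsi; rewrite E lee_fin.
  by move=> h; apply: le_lt_trans h _; rewrite ltrDl.
Qed.

End Main.

Unset Implicit Arguments.

(* T = Tp.+1 >= 1 ; nV t, nW t = dimensions of V_t, W_t (t = 1..T);
   the full space V~ has dimension dimPre nV nW Tp.+1. *)
Theorem theorem1 (R : realType) (Tp : nat) (nV nW : nat -> nat)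
  (M : nat) (hM : (2 <= M)%N) (J : nat)
  (c : 'I_M -> 'M[R[i]]_(dimPre nV nW Tp.+1))
  (a : 'I_J -> 'I_M -> 'M[R[i]]_(dimPre nV nW Tp.+1))
  (b : 'I_J -> R)
  (hc : forall m, herm_op (c m))
  (ha : forall j m, herm_op (a j m))
  (Tset : set ('I_M -> 'M[R[i]]_(dimPre nV nW Tp.+1)))
  (hT0 : Tset !=set0)
  (hTconv : tup_convex Tset)
  (hTsub : forall Phi, Tset Phi -> in_TG nV nW Tp M Phi)
  (Cset : set ('I_M -> 'M[R[i]]_(dimPre nV nW Tp.+1)))
  (Sset : set 'M[R[i]]_(dimPre nV nW Tp.+1))
  (hCclosed : tup_closed Cset) (hCconv : tup_convex Cset) (hCcone : tup_cone Cset)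
  (hCsub : forall Phi, Cset Phi -> in_CG Phi)
  (hSclosed : mx_closed Sset) (hSconv : mx_convex Sset)
  (hSsub : forall X, Sset X -> in_SG nV nW Tp X)
  (hTbar : tup_closure Tset = [set Phi | Cset Phi /\ Sset (\sum_(m < M) Phi m)]) :
  let eta j (Phi : 'I_M -> 'M[R[i]]_(dimPre nV nW Tp.+1)) : R :=
    \sum_(m < M) hs_ip (Phi m) (a j m) - b j in
  let Pobj (Phi : 'I_M -> 'M[R[i]]_(dimPre nV nW Tp.+1)) : R :=
    \sum_(m < M) hs_ip (Phi m) (c m) in
  let Pset := [set Phi | Tset Phi /\ forall j, eta j Phi <= 0] in
  let z (q : 'I_J -> R) m := c m - \sum_(j < J) (q j)%:C *: a j m in
  let Dset := [set chq : 'M[R[i]]_(dimPre nV nW Tp.+1) * ('I_J -> R) |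
                 herm_op chq.1 /\ (forall j, 0 <= chq.2 j) /\
                 dual_cone Cset (fun m => chq.1 - z chq.2 m)] in
  let DS (chq : 'M[R[i]]_(dimPre nV nW Tp.+1) * ('I_J -> R)) : \bar R :=
    (support_fun Sset chq.1 + (\sum_(j < J) chq.2 j * b j)%:E)%E in
  tup_closure Pset = [set Phi | tup_closure Tset Phi /\ forall j, eta j Phi <= 0] ->
  ereal_sup [set (Pobj Phi)%:E | Phi in Pset] = ereal_inf [set DS chq | chq in Dset].
Proof.
intros.
apply: final => //.
Qed.
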